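(* Let $k\ge3$, $1\le s\le k$, $\mathbf n=(n_1,\dots,n_k)$, $r\le\min\{n_1,\dots,n_s\}$. For every $\mathcal A\in P_s(\mathbf n,r)$, $\operatorname{rank}(\mathcal A)=\operatorname{rank}(A_1)$, where $A_1\in\mathbb R^{n_1\times\prod_{i=2}^kn_i}$ is the flattening (matricization) of $\mathcal A$ with respect to its first factor.
   Context: $P_s(\mathbf n,r)$ is the set of tensors $\sum_{i=1}^r\sigma_i\mathbf a^{(1)}_i\otimes\cdots\otimes\mathbf a^{(k)}_i$ with $\sigma_i\in\mathbb R$, all $\mathbf a^{(l)}_i\in\mathbb R^{n_l}$ unit vectors, and for each $l\le s$ the vectors $\mathbf a^{(l)}_1,\dots,\mathbf a^{(l)}_r$ pairwise orthogonal. $\operatorname{rank}(\mathcal A)$ is the CP rank (least number of rank-one tensors summing to $\mathcal A$). *)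

(* Defs.v *)
From HB Require Import structures.
From mathcomp Require Import all_boot all_order all_algebra.
From mathcomp Require Import reals.
Set Implicit Arguments. Unset Strict Implicit. Unset Printing Implicit Defensive.
Import Order.TTheory GRing.Theory Num.Theory.
Local Open Scope ring_scope.

Section Tensors.
Variables (R : realType) (k : nat) (n : 'I_k -> nat).

Definition idx := {dffun forall l : 'I_k, 'I_(n l)}.
Local Notation tensor := {ffun idx -> R}.

Definition factors := forall l : 'I_k, 'I_(n l) -> R.

Definition outer (a : factors) : tensor := [ffun x : idx => \prod_(l < k) a l (x l)].

Definition has_cp_decomp (A : tensor) (m : nat) : Prop :=
  exists a : 'I_m -> factors, A = \sum_(i < m) outer (a i).

Definition is_cp_rank (A : tensor) (m : nat) : Prop :=
  has_cp_decomp A m /\ forall m', has_cp_decomp A m' -> (m <= m')%N.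

Definition dotv (p : nat) (u v : 'I_p -> R) : R := \sum_(j < p) u j * v j.

(* P_s(n, r): the tensors sum_i sigma_i a_i^(1) o ... o a_i^(k) with unit factor
   vectors, pairwise orthogonal in every mode l with l <= s (1-based), i.e.
   val l < s (0-based). *)
Definition in_Ps (s r : nat) (A : tensor) : Prop :=
  exists (sigma : 'I_r -> R) (a : 'I_r -> factors),
    [/\ forall (i : 'I_r) (l : 'I_k), dotv (a i l) (a i l) = 1,
        forall (l : 'I_k), (val l < s)%N -> forall i j : 'I_r, i != j ->
          dotv (a i l) (a j l) = 0
      & A = \sum_(i < r) [ffun x => sigma i * outer (a i) x]].

Definition rest_idx (f : 'I_k) :=
  {dffun forall l : {l : 'I_k | l != f}, 'I_(n (val l))}.

Definition combine (f : 'I_k) (i : 'I_(n f)) (x : rest_idx f) : idx :=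
  finfun (fun l : 'I_k =>
    match @idP (l != f) return 'I_(n l) with
    | ReflectT h => x (exist _ l h)
    | ReflectF h => cast_ord (congr1 n (esym (elimT eqP (negbNE (introN idP h))))) i
    end).

(* matricization A_(f) : rows indexed by i_f, columns by the remaining
   multi-indices (enumerated in a fixed order; #|rest_idx f| = prod_{l<>f} n_l) *)
Definition flattening (f : 'I_k) (A : tensor) : 'M[R]_(n f, #|{: rest_idx f}|) :=
  \matrix_(i, j) A (combine i (enum_val j)).

End Tensors.

Definition mode1 (k : nat) (hk : (3 <= k)%N) : 'I_k :=
  Ordinal (leq_trans (isT : (0 < 3)%N) hk).

(* Main.v *)
Require Import Defs.
From HB Require Import structures.
From mathcomp Require Import all_boot all_order all_algebra.
From mathcomp Require Import reals.
Set Implicit Arguments. Unset Strict Implicit.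
Import Order.TTheory GRing.Theory Num.Theory.
Local Open Scope ring_scope.

Section Aux.
Variables (R : realType) (k : nat) (n : 'I_k -> nat) (f : 'I_k).

Lemma match_reflF (P : Prop) (b : bool) (T : Type) (p : reflect P b)
  (g : P -> T) (e : ~ P -> T) : ~ P ->
  exists np, match p with ReflectT h => g h | ReflectF h => e h end = e np.
Proof. by case: p => h np; [exfalso; exact: np h | exists h]. Qed.

Lemma match_reflT (P : Prop) (b : bool) (T : Type) (p : reflect P b)
  (g : P -> T) (e : ~ P -> T) : P ->
  exists hp, match p with ReflectT h => g h | ReflectF h => e h end = g hp.
Proof. by case: p => h hp; [exists h | exfalso; exact: h hp]. Qed.

Lemma combine_f (i : 'I_(n f)) (x : rest_idx n f) : combine i x f = i.
Proof.
have nff : ~ (f != f) by rewrite eqxx.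
rewrite /combine ffunE.
have [np ->] := @match_reflF _ _ 'I_(n f) idP (fun h => x (exist _ f h))
  (fun h => cast_ord (congr1 n (esym (elimT eqP (negbNE (introN idP h))))) i)
  nff.
by apply: val_inj.
Qed.

Lemma combine_neq (i : 'I_(n f)) (x : rest_idx n f) (l : 'I_k) (h : l != f) :
  combine i x l = x (exist _ l h).
Proof.
rewrite /combine ffunE.
have [hp ->] := @match_reflT _ _ 'I_(n l) idP (fun h => x (exist _ l h))
  (fun h => cast_ord (congr1 n (esym (elimT eqP (negbNE (introN idP h))))) i) h.
by have -> : hp = h by apply: eq_irrelevance.
Qed.

Definition rest (x : idx n) : rest_idx n f :=
  finfun (fun l : {l : 'I_k | l != f} => x (val l)).

Lemma combine_surj (x : idx n) : x = combine (x f) (rest x).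
Proof.
apply/ffunP => l; case: (eqVneq l f) => [->|h].
  by rewrite combine_f.
by rewrite (combine_neq _ _ h) /rest ffunE.
Qed.

Lemma prod_sub (F : 'I_k -> R) :
  \prod_(l < k | l != f) F l = \prod_(l : {l : 'I_k | l != f}) F (val l).
Proof. exact: (big_sub (fun l => l != f)). Qed.

Lemma outer_combine (a : factors R n) (i : 'I_(n f)) (x : rest_idx n f) :
  outer a (combine i x) =
  a f i * \prod_(l : {l : 'I_k | l != f}) a (val l) (x l).
Proof.
rewrite /outer ffunE (bigD1 f) //= combine_f; congr (_ * _).
rewrite (prod_sub (fun l => a l (combine i x l))).
apply: eq_bigr => -[l h] _ /=.
by rewrite (combine_neq _ _ h).
Qed.

Lemma flat_fact m (c : 'I_m -> R) (a : 'I_m -> factors R n) :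
  flattening f (\sum_(t < m) [ffun x => c t * outer (a t) x]) =
  (\matrix_(j, t) a t f j) *m
  (\matrix_(t, col) (c t * \prod_(l : {l : 'I_k | l != f})
                       a t (val l) ((enum_val col : rest_idx n f) l))).
Proof.
apply/matrixP => j col; rewrite !mxE sum_ffunE; apply: eq_bigr => t _.
by rewrite ffunE outer_combine !mxE mulrCA.
Qed.

End Aux.

Theorem proposition3p4 (R : realType) (k : nat) (hk : (3 <= k)%N)
  (s : nat) (hs : (1 <= s <= k)%N) (n : 'I_k -> nat) (r : nat)
  (hr : forall l : 'I_k, (val l < s)%N -> (r <= n l)%N)
  (A : {ffun idx n -> R}) :
  in_Ps s r A -> is_cp_rank A (\rank (flattening (mode1 hk) A)).
Proof.
move=> [sigma [a [hunit horth hA]]].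
set f := mode1 hk.
have hf0 : (val f < s)%N by case/andP: hs.
pose U : 'M[R]_(n f, r) := \matrix_(j, t) a t f j.
pose B : 'M[R]_(r, #|{: rest_idx n f}|) := \matrix_(t, col) (sigma t * \prod_(l : {l : 'I_k | l != f})
                       a t (val l) ((enum_val col : rest_idx n f) l)).
have hfl : flattening f A = U *m B by rewrite hA flat_fact.
have UtU : U^T *m U = 1%:M.
  apply/matrixP => i j; rewrite !mxE.
  under eq_bigr do rewrite !mxE.
  case: eqVneq => [<-|hij] /=; first exact: hunit.
  exact: horth.
have rkB : \rank B = \rank (flattening f A).
  apply/eqP; rewrite eqn_leq; apply/andP; split.
    have -> : B = U^T *m flattening f A by rewrite hfl mulmxA UtU mul1mx.
    exact: mxrankM_maxr.
  rewrite hfl; exact: mxrankM_maxr.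
split.
  rewrite -rkB.
  set p := maxrankfun B.
  have : (flattening f A <= rowsub p B)%MS by rewrite eq_maxrowsub hfl submxMl.
  move/submxP => [C hC].
  pose a' : 'I_(\rank B) -> factors R n := fun t l y =>
    if l == f then sigma (p t) * \sum_(j : 'I_(n f) | val j == val y) C j t
    else a (p t) l y.
  exists a'.
  apply/ffunP => x; rewrite sum_ffunE.
  move: (x f) (rest f x) (combine_surj f x) => i y ->.
  have -> : A (combine i y) = flattening f A i (enum_rank y) by rewrite mxE enum_rankK.
  rewrite hC mxE; apply: eq_bigr => t _.
  rewrite outer_combine !mxE enum_rankK /a' eqxx.
  rewrite (big_pred1 i); last by move=> j.
  rewrite mulrA [C i t * _]mulrC; congr (_ * _).
  by apply: eq_bigr => l _; rewrite (negbTE (valP l)).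
move=> m' [a' ha'].
have e : \sum_(i < m') outer (a' i) = \sum_(i < m') [ffun x => 1 * outer (a' i) x].
  by apply: eq_bigr => i _; apply/ffunP => x; rewrite [RHS]ffunE mul1r.
rewrite ha' e flat_fact.
exact: leq_trans (mxrankM_maxl _ _) (rank_leq_col _).
Qed.
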